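(* Let $m\neq0$ and $r$ be real numbers. For all integers $n,k\ge0$, $$L_{m,r}(n,k)=\frac{1}{m^k\,k!}\sum_{j=0}^{k}\binom{k}{j}(-1)^{k-j}\prod_{i=0}^{n-1}(2r+jm+im),$$ and for all integers $n\ge k\ge1$, $$L_{m,r}(n,k)=\sum_{j=k}^{n}L_{m,r}(j-1,k-1)\prod_{i=j}^{n-1}(2r+km+im).$$
   Context: For real $m,r$, let $w_{m,r}(n,k)$ and $W_{m,r}(n,k)$ be the $r$-Whitney numbers of the first and second kind, defined by the polynomial identities $\prod_{j=0}^{n-1}(x-r-jm)=\sum_{k=0}^n w_{m,r}(n,k)x^k$ and $x^n=\sum_{k=0}^n W_{m,r}(n,k)\prod_{j=0}^{k-1}(x-r-jm)$ (both vanishing for $k>n$ or $k<0$; empty products equal $1$). The $r$-Whitney-Lah numbers are $L_{m,r}(n,k)=\sum_{j=k}^{n}(-1)^{n-j}w_{m,r}(n,j)W_{m,r}(j,k)$, with $L_{m,r}(n,k)=0$ for $n<k$ or $k<0$. *)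

(* Defs.v *)
(* The identities are purely algebraic; we state them over an
   arbitrary real field R (this includes the real numbers). *)
From HB Require Import structures.
From mathcomp Require Import all_boot all_order all_algebra.
Set Implicit Arguments. Unset Strict Implicit. Unset Printing Implicit Defensive.
Import Order.TTheory GRing.Theory Num.Theory.
Local Open Scope ring_scope.

Section Whitney.
Variable R : realFieldType.
Variables m r : R.

Definition wfall (k : nat) : {poly R} :=
  \prod_(j < k) ('X - (r + j%:R * m)%:P).

Definition wW1 (n k : nat) : R := (wfall n)`_k.

(* Coordinates of a polynomial p (of degree <= d) in the basis
   wfall 0, ..., wfall d (each wfall j is monic of degree j): the top
   coordinate is the coefficient of X^d, then recurse on the remainder. *)
Fixpoint wcoord (d : nat) (p : {poly R}) (k : nat) : R :=
  match d with
  | 0 => if k == 0%N then p`_0 else 0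
  | d'.+1 => let c := p`_d in
             if k == d then c else wcoord d' (p - c *: wfall d) k
  end.

Definition wW2 (n k : nat) : R := wcoord n 'X^n k.

Definition wLah (n k : nat) : R :=
  \sum_(k <= j < n.+1) (-1) ^+ (n - j) * wW1 n j * wW2 j k.

Lemma wfall_monic k : wfall k \is monic.
Proof. by apply: monic_prod => i _; apply: monicXsubC. Qed.
Lemma size_wfall k : size (wfall k) = k.+1.
Proof. by rewrite /wfall size_prod_XsubC -[in RHS](card_ord k) cardT enumT. Qed.
Lemma wcoord_spec d (p : {poly R}) : (size p <= d.+1)%N ->
  p = \sum_(k < d.+1) wcoord d p k *: wfall k.
Proof.
elim: d p => [|d IH] p hp /=.
  rewrite big_ord1 /= /wfall big_ord0 alg_polyC.
  by rewrite [LHS]size1_polyC.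
rewrite big_ord_recr /= eqxx.
set c := p`_d.+1.
have hq : (size (p - c *: wfall d.+1)%R <= d.+1)%N.
  have hl : lead_coef (wfall d.+1) = 1 by apply/monicP/wfall_monic.
  apply/leq_sizeP => j hj.
  rewrite coefB coefZ.
  move: hj; rewrite leq_eqVlt => /orP [/eqP <-|hgt].
    have -> : (wfall d.+1)`_d.+1 = lead_coef (wfall d.+1) by rewrite /lead_coef size_wfall.
    by rewrite hl mulr1 subrr.
  rewrite !nth_default ?mulr0 ?subrr // ?size_wfall //.
  by apply: leq_trans hp hgt.
rewrite (eq_bigr (fun k : 'I_d.+1 => wcoord d (p - c *: wfall d.+1) k *: wfall k)).
  by rewrite -IH // subrK.
by move=> i _; rewrite ifN // neq_ltn ltn_ord.
Qed.

Lemma wW2_spec n : 'X^n = \sum_(k < n.+1) wW2 n k *: wfall k.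
Proof. by apply: wcoord_spec; rewrite size_polyXn. Qed.

Lemma wW2_gt n k : (n < k)%N -> wW2 n k = 0.
Proof.
rewrite /wW2; elim: n 'X^n k => [|n IH] p k hk /=.
  by rewrite ifN // -lt0n (leq_ltn_trans _ hk).
by rewrite ifN ?(gtn_eqF hk) // IH // ltnW.
Qed.

Lemma wW1_spec n : wfall n = \sum_(k < n.+1) wW1 n k *: 'X^k.
Proof. by rewrite /wW1 -{1}[wfall n]coefK poly_def size_wfall. Qed.

End Whitney.

(* Main.v *)
Require Import Defs.
From HB Require Import structures.
From mathcomp Require Import all_boot all_order all_algebra.
From mathcomp Require Import ring zify.
Import Order.TTheory GRing.Theory Num.Theory.
Local Open Scope ring_scope.

Section Proofs.
Variable R : realFieldType.
Variables m r : R.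
Local Notation wf := (wfall m r).
Local Notation L := (wLah m r).

Definition Qp n : {poly R} := \prod_(i < n) ('X + (r + i%:R * m)%:P).

Lemma wf_S k : wf k.+1 = wf k * ('X - (r + k%:R * m)%:P).
Proof. by rewrite /wfall big_ord_recr. Qed.

Lemma coef_wf_top k : (wf k)`_k = 1.
Proof.
have := monicP (wfall_monic m r k); rewrite /lead_coef size_wfall /=. done.
Qed.

Lemma coef_wf_big k j : (k < j)%N -> (wf k)`_j = 0.
Proof. by move=> h; rewrite nth_default // size_wfall. Qed.

Lemma uniq0 N (a : nat -> R) : \sum_(k < N) a k *: wf k = 0 ->
  forall k, (k < N)%N -> a k = 0.
Proof.
elim: N => [|N IH] H k hk; first done.
move: H; rewrite big_ord_recr /= => H.
have aN : a N = 0.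
  have := congr1 (fun p : {poly R} => p`_N) H.
  rewrite coef0 coefD coefZ coef_wf_top mulr1 coef_sum big1 ?add0r //.
  by move=> i _; rewrite coefZ coef_wf_big ?mulr0.
move: H; rewrite aN scale0r addr0 => H.
case: (ltngtP k N) => h; first exact: IH.
  by move: hk; rewrite ltnS leqNgt h.
by rewrite h.
Qed.

Lemma uniqc N (a b : nat -> R) :
  \sum_(k < N) a k *: wf k = \sum_(k < N) b k *: wf k ->
  forall k, (k < N)%N -> a k = b k.
Proof.
move=> H k hk; apply/eqP; rewrite -subr_eq0; apply/eqP.
apply: (@uniq0 N (fun k => a k - b k)) hk.
under eq_bigr do rewrite scalerBl.
by rewrite sumrB H subrr.
Qed.

Lemma wLahE n k : L n k = \sum_(j < n.+1) (-1) ^+ (n - j) * wW1 m r n j * wW2 m r j k.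
Proof.
rewrite /wLah big_geq_mkord big_mkcond /=; apply: eq_bigr => j _.
by case: leqP => // h; rewrite wW2_gt // mulr0.
Qed.

Lemma wLah_gt n k : (n < k)%N -> L n k = 0.
Proof. by move=> h; rewrite /wLah big_geq. Qed.

Lemma Xn_widen j n : (j <= n)%N -> 'X^j = \sum_(k < n.+1) wW2 m r j k *: wf k.
Proof.
move=> hj; rewrite (wW2_spec m r j).
rewrite (big_ord_widen n.+1 (fun k => wW2 m r j k *: wf k)) // big_mkcond.
by apply: eq_bigr => k _; case: ltnP => // h; rewrite wW2_gt // scale0r.
Qed.

Lemma LQ1 n : \sum_(k < n.+1) L n k *: wf k =
   \sum_(j < n.+1) ((-1) ^+ (n - j) * wW1 m r n j) *: 'X^j.
Proof.
under eq_bigr do rewrite wLahE scaler_suml.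
rewrite exchange_big /=; apply: eq_bigr => j _.
rewrite (@Xn_widen j n (ltnSE (ltn_ord j))) scaler_sumr; apply: eq_bigr => k _.
by rewrite scalerA.
Qed.

Lemma compN n : wf n \Po (- 'X) = (-1) ^+ n *: Qp n.
Proof.
elim: n => [|n IH].
  by rewrite /wfall /Qp !big_ord0 -polyC1 comp_polyC expr0 scale1r.
rewrite wf_S /Qp big_ord_recr -/(Qp n) comp_polyM IH comp_polyB comp_polyX comp_polyC.
rewrite exprS mulN1r scaleNr -scalerAl -scalerN; congr (_ *: _).
by rewrite -mulrN opprD.
Qed.

Lemma Qp_S n : Qp n.+1 = Qp n * ('X + (r + n%:R * m)%:P).
Proof. by rewrite /Qp big_ord_recr. Qed.
Lemma LQ n : \sum_(k < n.+1) L n k *: wf k = Qp n.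
Proof.
rewrite LQ1.
have -> : Qp n = (-1) ^+ n *: (wf n \Po (- 'X)).
  by rewrite compN scalerA -exprMn mulrNN mulr1 expr1n scale1r.
rewrite comp_polyE size_wfall scaler_sumr; apply: eq_bigr => j _.
rewrite -scaleN1r exprZn !scalerA; congr (_ *: _).
have hj : (j <= n)%N by rewrite -ltnS.
have -> : (-1) ^+ n = (-1) ^+ (n - j) * (-1) ^+ j :> R by rewrite -exprD subnK.
set s := (-1) ^+ j : R.
have ss : s * s = 1 by rewrite -exprMn mulrNN mulr1 expr1n.
by rewrite /wW1 [RHS]mulrAC -(mulrA _ s s) ss mulr1.
Qed.


Definition dd n k : R := 2 * r + k%:R * m + n%:R * m.

Lemma Lrec_gen n : forall k, (k < n.+2)%N ->
  L n.+1 k = (if k is k'.+1 then L n k' else 0) + dd n k * L n k.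
Proof.
apply: (@uniqc n.+2 (L n.+1) (fun k => (if k is k'.+1 then L n k' else 0) + dd n k * L n k)).
rewrite LQ Qp_S -LQ mulr_suml.
have key : forall k, (L n k *: wf k) * ('X + (r + n%:R * m)%:P) =
    L n k *: wf k.+1 + (dd n k * L n k) *: wf k.
  move=> k; rewrite -scalerAl wf_S.
  have -> : 'X + (r + n%:R * m)%:P = ('X - (r + k%:R * m)%:P) + (dd n k)%:P.
    rewrite -addrA -polyCN -polyCD; congr (_ + _%:P); rewrite /dd; ring.
  rewrite mulrDr scalerDr; congr (_ + _).
  by rewrite mulrC mul_polyC scalerA mulrC.
under eq_bigr do rewrite key.
rewrite big_split /=.
under [RHS]eq_bigr do rewrite scalerDl.
rewrite [RHS]big_split /=; congr (_ + _).
  by rewrite [RHS]big_ord_recl /= scale0r add0r.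
by rewrite [RHS]big_ord_recr /= wLah_gt // mulr0 scale0r addr0.
Qed.

Lemma Lrec n k : L n.+1 k.+1 = L n k + dd n k.+1 * L n k.+1.
Proof.
case: (ltnP k.+1 n.+2) => h; first by rewrite Lrec_gen.
rewrite !wLah_gt ?mulr0 ?addr0 //; lia.
Qed.

Lemma L0 n : L n.+1 0 = dd n 0 * L n 0.
Proof. by rewrite Lrec_gen // add0r. Qed.

Definition Pp n (j : nat) : R := \prod_(i < n) (2 * r + j%:R * m + i%:R * m).
Definition Sp n k : R := \sum_(j < k.+1) ('C(k, j))%:R * (-1) ^+ (k - j) * Pp n j.

Lemma Pp_S n j : Pp n.+1 j = Pp n j * (2 * r + j%:R * m + n%:R * m).
Proof. by rewrite /Pp big_ord_recr. Qed.

Lemma Sp_rec n k : Sp n.+1 k.+1 = dd n k.+1 * Sp n k.+1 + m * k.+1%:R * Sp n k.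
Proof.
rewrite /Sp big_ord_recr [in RHS]big_ord_recr /= mulrDr mulr_sumr [m * _ * _]mulr_sumr.
rewrite addrAC -big_split /=; congr (_ + _).
  apply: eq_bigr => j _ /=.
  have hj : (j <= k)%N by rewrite -ltnS.
  have hb : ('C(k.+1, j))%:R * (k.+1 - j)%:R = k.+1%:R * ('C(k, j))%:R :> R.
    by rewrite -!natrM mul_bin_down mulnC.
  rewrite Pp_S subSn // exprS.
  have e : m * k.+1%:R * (('C(k, j))%:R * (-1) ^+ (k - j) * Pp n j) =
     m * (k.+1%:R * ('C(k, j))%:R) * (-1) ^+ (k - j) * Pp n j by ring.
  rewrite e -hb natrB 1?ltnW // /dd; ring.
by rewrite binn subnn expr0 Pp_S /dd; ring.
Qed.

Lemma F1 (hm : m != 0) n k : L n k = (m ^+ k * (k`!)%:R)^-1 * Sp n k.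
Proof.
elim: n k => [|n IH] k.
  case: k => [|k].
    rewrite /wLah big_nat1 subnn expr0 mul1r /wW1 /wW2 /wfall big_ord0 /=.
    rewrite expr0 coef1 /Sp big_ord1 /Pp big_ord0 /=.
    by rewrite expr0 fact0 bin0 subnn expr0 !mul1r invr1 !mulr1.
  rewrite wLah_gt //.
  have -> : Sp 0 k.+1 = (-1 + 1) ^+ k.+1.
    rewrite exprDn; apply: eq_bigr => j _.
    by rewrite /Pp big_ord0 mulr1 expr1n mulr1 mulr_natl.
  by rewrite addNr expr0n mulr0.
case: k => [|k].
  rewrite L0 IH /Sp !big_ord1 /= Pp_S /dd expr0 mul1r invr1 !mul1r; ring.
rewrite Lrec !IH Sp_rec factS natrM exprS.
have h1 : (k`!)%:R != 0 :> R by rewrite pnatr_eq0 -lt0n fact_gt0.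
have h2 : (k.+1)%:R != 0 :> R by rewrite pnatr_eq0.
field.
by rewrite h1 hm expf_neq0 // -mulrS h2.
Qed.

Lemma F2 k' n : L n k'.+1 = \sum_(k'.+1 <= j < n.+1)
   L (j - 1) k' * \prod_(j <= i < n) (2 * r + k'.+1%:R * m + i%:R * m).
Proof.
elim: n => [|n IH]; first by rewrite wLah_gt // big_geq.
case: (leqP k'.+1 n.+1) => h; last by rewrite wLah_gt // big_geq.
rewrite (big_nat_recr n.+1 _ _ h) /= (@big_geq _ _ _ n.+1 n.+1) // mulr1 subn1 /=.
rewrite Lrec IH addrC; congr (_ + _).
rewrite mulr_sumr; apply: eq_big_nat => j /andP [hj1 hj2].
rewrite (@big_nat_recr _ _ _ n j) /= /dd; first ring.
by rewrite -ltnS.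
Qed.

End Proofs.

Theorem mainTheorem12 (R : realFieldType) (m r : R) (hm : m != 0) :
  (forall n k : nat,
     wLah m r n k =
       (m ^+ k * (k`!)%:R)^-1 *
       \sum_(j < k.+1) ('C(k, j))%:R * (-1) ^+ (k - j) *
          \prod_(i < n) (2 * r + j%:R * m + i%:R * m))
  /\
  (forall n k : nat, (1 <= k <= n)%N ->
     wLah m r n k =
       \sum_(k <= j < n.+1)
          wLah m r (j - 1) (k - 1) * \prod_(j <= i < n) (2 * r + k%:R * m + i%:R * m)).
Proof.
split; first by move=> n k; rewrite F1.
move=> n [|k] // _.
by rewrite F2 subn1.
Qed.
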